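(* Let $E$ be finite, $\Omega=E^{\mathbb{Z}}$ with left shift $S$, fix $\mathtt a\in E$ and let $\mathbf a$ be the all-$\mathtt a$ configuration. Let $\phi\in C(\Omega)$ have the extensibility property, let $\gamma^\phi$ be the associated Gibbsian specification $\gamma^\phi_\Lambda(\omega_\Lambda|\omega_{\Lambda^c})=\big(\sum_{\xi_\Lambda\in E^\Lambda}e^{\rho^\phi(\xi_\Lambda\omega_{\mathbb{Z}\setminus\Lambda},\omega)}\big)^{-1}$, and let $\phi_{\gamma^\phi}(\omega)=\log\frac{\gamma^\phi_{\{0\}}(\omega_0|\mathbf a_{-\infty}^{-1}\omega_1^\infty)}{\gamma^\phi_{\{0\}}(\mathtt a|\mathbf a_{-\infty}^{-1}\omega_1^\infty)}$. Then $\phi_{\gamma^\phi}$ is weakly cohomologous to $\phi$: there exists $C\in\mathbb{R}$ such that for every shift-invariant Borel probability measure $\tau$ on $\Omega$, $$\int_\Omega\phi_{\gamma^\phi}\,d\tau=\int_\Omega\phi\,d\tau+C.$$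
   Context: $E$ finite, discrete; $\Omega=E^{\mathbb{Z}}$ with product topology; $(S\omega)_i=\omega_{i+1}$. For $\omega\in\Omega$, $a\in E$, $\omega^a$ equals $a$ at $0$ and $\omega_k$ at $k\neq0$. A continuous $\phi$ has the extensibility property if for all $a,\tilde a\in E$, $\sum_{i=-n}^{n}[\phi(S^i\omega^a)-\phi(S^i\omega^{\tilde a})]$ converges uniformly in $\omega$; then $\rho^\phi(\xi,\eta)=\lim_{n}\sum_{i=-n}^n[\phi(S^i\xi)-\phi(S^i\eta)]$ exists for all $\xi,\eta$ differing at finitely many sites, and $\gamma^\phi$ above is a translation-invariant Gibbsian specification. $\xi_\Lambda\omega_{\mathbb{Z}\setminus\Lambda}$ equals $\xi$ on $\Lambda$ and $\omega$ elsewhere; $\mathbf a_{-\infty}^{-1}\omega_1^\infty$ is the boundary condition equal to $\mathtt a$ on negative sites and $\omega_k$ on sites $k\ge1$ (so $\phi_{\gamma^\phi}$ depends only on $\omega_0,\omega_1,\dots$). *)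

(* Defs.v *)
From HB Require Import structures.
From mathcomp Require Import all_boot all_order all_algebra.
From mathcomp Require Import all_classical all_reals all_analysis.
Set Implicit Arguments. Unset Strict Implicit. Unset Printing Implicit Defensive.
Import Order.TTheory GRing.Theory Num.Theory numFieldNormedType.Exports.
Local Open Scope classical_set_scope.
Local Open Scope ring_scope.

(* Configuration space Omega = E^Z.  It is parameterized by a distinguished
   letter a (the letter "a" of the statement) only in order to equip it with
   a pointedType structure (needed by g_sigma_algebraType). *)
Section Config.
Variables (E : finType) (a : E).
Definition Omega of E := int -> E.
HB.instance Definition _ := Choice.on (Omega a).
HB.instance Definition _ := isPointed.Build (Omega a) (fun _ => a).
End Config.

Section Defs.
Variables (E : finType) (a : E).
Local Notation Om := (Omega a).

Definition Sshift (w : Om) : Om := fun k => w (k + 1).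
Definition shiftn (i : int) (w : Om) : Om := fun k => w (k + i).

Definition upd (w : Om) (b : E) : Om := fun k => if k == 0 then b else w k.

Definition cyl (n : nat) (w : Om) : set Om :=
  [set w' | forall k : int, `|k| <= n%:Z -> w' k = w k].

(* product topology (E discrete): cylinders form a neighbourhood base *)
Definition prod_open (U : set Om) : Prop :=
  forall w, U w -> exists n, cyl n w `<=` U.

Definition BorelOmega := g_sigma_algebraType prod_open.

Variable R : realType.

Definition cont_Omega (phi : Om -> R) : Prop :=
  forall w (e : R), 0 < e -> exists n, forall w', cyl n w w' -> `|phi w' - phi w| < e.

Definition symsum (phi : Om -> R) (x y : Om) (n : nat) : R :=
  \sum_(0 <= j < (2 * n).+1)
     (phi (shiftn (j%:Z - n%:Z) x) - phi (shiftn (j%:Z - n%:Z) y)).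

Definition extensible (phi : Om -> R) : Prop :=
  forall b b' : E, exists g : Om -> R,
    forall e : R, 0 < e -> exists N : nat, forall n, (N <= n)%N ->
      forall w, `|symsum phi (upd w b) (upd w b') n - g w| < e.

Definition rho (phi : Om -> R) (x y : Om) : R := limn (symsum phi x y).

(* single-site Gibbsian specification:
   gamma_{0}(w_0 | w_{Z\0}) = (sum_{c in E} exp rho(w^c, w))^{-1} *)
Definition gamma0 (phi : Om -> R) (w : Om) : R :=
  (\sum_(c : E) expR (rho phi (upd w c) w))^-1.

Definition bc (w : Om) : Om := fun k => if k < 0 then a else w k.

Definition phi_gamma (phi : Om -> R) (w : Om) : R :=
  ln (gamma0 phi (bc w) / gamma0 phi (upd (bc w) a)).

End Defs.

(* Main.v *)
Set Warnings "-all".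
Require Import Defs.
From HB Require Import structures.
From mathcomp Require Import all_boot all_order all_algebra.
From mathcomp Require Import all_classical all_reals all_analysis.
From mathcomp Require Import zify ring lra.
Import Order.TTheory GRing.Theory Num.Theory numFieldNormedType.Exports.
Local Open Scope classical_set_scope.
Local Open Scope ring_scope.
Set Implicit Arguments. Unset Strict Implicit.
Section Aux.
Variable R : realType.
Lemma limn_eps (u : nat -> R) l :
  (forall e : R, 0 < e -> exists N, forall n, (N <= n)%N -> `|u n - l| < e) -> limn u = l.
Proof.
move=> H; apply/cvg_lim => //; apply/cvgrPdist_lt => e e0.
have [N HN] := H e e0. exists N => // n /= Nn. rewrite distrC; exact: HN.
Qed.

Lemma pigeon (T : finType) (P : nat -> Prop) (g : nat -> T) :
  (forall M, exists N, (M <= N)%N /\ P N) ->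
  exists c, forall M, exists N, (M <= N)%N /\ P N /\ g N = c.
Proof.
move=> HP; apply: contrapT => H.
have H' : forall c : T, exists M, forall N, (M <= N)%N -> ~ (P N /\ g N = c).
  move=> c; apply: contrapT => Hc; apply: H; exists c => M.
  apply: contrapT => HM; apply: Hc; exists M => N MN [PN gN]; apply: HM.
  by exists N.
have [Mf HMf] := choice H'.
have [N [MN PN]] := HP (\max_(c : T) Mf c).
apply: (HMf (g N) N) => //.
apply: leq_trans MN; exact: (leq_bigmax_cond (g N)).
Qed.
End Aux.
Section Om.
Variables (R : realType) (E : finType) (a : E).
Local Notation Om := (Omega a).
Implicit Types (f g : Om -> R) (w : Om).

Definition agr (d : nat) (w w' : Om) := forall k : int, `|k| < d%:Z -> w' k = w k.
Definition Inf (P : nat -> Prop) := forall M, exists N, (M <= N)%N /\ P N.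

Lemma konig_step (ws : nat -> Om) d p : Inf (fun N => agr d p (ws N)) ->
  exists p', Inf (fun N => agr d.+1 p' (ws N)) /\ agr d p p'.
Proof.
move=> HI.
have [c Hc] := @pigeon _ _ (fun N => (ws N (- d%:Z), ws N d%:Z)) HI.
exists (fun k => if k == d%:Z then c.2 else if k == - d%:Z then c.1 else p k); split.
  move=> M; have [N [MN [HN gN]]] := Hc M; exists N; split => // k hk.
  case: eqP => [->|kd]; first by rewrite -gN.
  case: eqP => [->|kd']; first by rewrite -gN.
  apply: HN; lia.
move=> k hk; case: eqP => [kd|_]; first lia.
case: eqP => [kd|_]; first lia. done.
Qed.

Lemma konig (ws : nat -> Om) : exists w, forall d, Inf (fun N => agr d w (ws N)).
Proof.
have /choice [st Hst] : forall dp : nat * Om, exists p',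
    Inf (fun N => agr dp.1 dp.2 (ws N)) ->
    Inf (fun N => agr dp.1.+1 p' (ws N)) /\ agr dp.1 dp.2 p'.
  move=> [d p] /=; have [HI|HI] := pselect (Inf (fun N => agr d p (ws N))).
    have [p' Hp'] := konig_step HI; exists p' => _; exact: Hp'.
  by exists p.
pose fix pp (d : nat) : Om := if d is d'.+1 then st (d', pp d') else ws 0%N.
have I0 : forall d, Inf (fun N => agr d (pp d) (ws N)).
  elim=> [|d IH]; first by move=> M; exists M; split => // k; lia.
  exact: (Hst (d, pp d) IH).1.
have A1 : forall d, agr d (pp d) (pp d.+1) by move=> d; exact: (Hst (d, pp d) (I0 d)).2.
have A2 : forall d d', (d <= d')%N -> agr d (pp d) (pp d').
  move=> d d' /subnK <-; elim: (d' - d)%N => [|m IH] /=; first by [].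
  move=> k hk; have := A1 (m + d)%N k => /= ->; [exact: IH|lia].
exists (fun k => pp (`|k|%N.+1) k) => d M.
have [N [MN HN]] := I0 d M; exists N; split => // k hk.
rewrite HN //; apply: (A2 _ d); lia.
Qed.

Lemma agr_cyl d w w' : agr d.+1 w w' -> cyl d w w'.
Proof. move=> h k hk; apply: h; lia. Qed.

Lemma cyl_le m n w w' : (m <= n)%N -> cyl n w w' -> cyl m w w'.
Proof. move=> mn h k hk; apply: h; lia. Qed.

Lemma cont_bounded f : cont_Omega f -> exists K : R, forall w, `|f w| <= K.
Proof.
move=> cf; apply: contrapT => H.
have H' : forall N : nat, exists w, N%:R < `|f w|.
  move=> N; apply: contrapT => HN; apply: H; exists N%:R => w.
  by rewrite leNgt; apply/negP => h; apply: HN; exists w.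
have [ws Hws] := choice H'.
have [w Hw] := konig ws.
have [n Hn] := cf w 1 ltr01.
have [N [MN HN]] := Hw n.+1 (Num.Def.trunc (`|f w| + 1)).+1.
have := Hn _ (agr_cyl HN); have := Hws N.
have := truncnS_gt (`|f w| + 1).
have : (Num.Def.trunc (`|f w| + 1)).+1%:R <= N%:R :> R by rewrite ler_nat.
move=> h1 h2 h3 h4.
have t : `|f (ws N)| <= `|f (ws N) - f w| + `|f w|.
  by rewrite -[X in `|X| <= _](subrK (f w)) ler_normD.
lra.
Qed.

Lemma cont_unif f : cont_Omega f -> forall e : R, 0 < e ->
  exists n, forall w w', cyl n w w' -> `|f w' - f w| < e.
Proof.
move=> cf e e0; apply: contrapT => H.
have H' : forall N : nat, exists ww : Om * Om, cyl N ww.1 ww.2 /\ e <= `|f ww.2 - f ww.1|.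
  move=> N; apply: contrapT => HN; apply: H; exists N => w w' hw.
  rewrite ltNge; apply/negP => h; apply: HN; by exists (w, w').
have [ws Hws] := choice H'.
have [w Hw] := konig (fun N => (ws N).1).
have [n Hn] := cf w (e / 2) (divr_gt0 e0 (ltr0Sn _ 1)).
have [N [MN HN]] := Hw n.+1 n.
have [h1 h2] := Hws N.
have c1 := Hn _ (agr_cyl HN).
have c2 : cyl n w (ws N).2.
  move=> k hk; rewrite h1; [exact: HN|]; lia.
have c3 := Hn _ c2.
have t : `|f (ws N).2 - f (ws N).1| <= `|f (ws N).2 - f w| + `|f (ws N).1 - f w|.
  rewrite -[X in `|X| <= _](subrKA (f w)). 
  by apply: (le_trans (ler_normD _ _)); rewrite [`|f w - _|]distrC.
lra.
Qed.

Definition ccont (T : Om -> Om) :=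
  forall n, exists m, forall w w', cyl m w w' -> cyl n (T w) (T w').

Lemma cont_comp f T : cont_Omega f -> ccont T -> cont_Omega (fun w => f (T w)).
Proof.
move=> cf cT w e e0; have [n Hn] := cf (T w) e e0.
have [m Hm] := cT n; exists m => w' h; exact/Hn/Hm.
Qed.

Lemma cont_cst (c : R) : cont_Omega (fun _ : Om => c).
Proof. by move=> w e e0; exists 0%N => w' _; rewrite subrr normr0. Qed.

Lemma cont_add f g : cont_Omega f -> cont_Omega g -> cont_Omega (fun w => f w + g w).
Proof.
move=> cf cg w e e0.
have e2 : 0 < e / 2 by apply: divr_gt0 => //; exact: (ltr0Sn _ 1).
have [n1 H1] := cf w _ e2; have [n2 H2] := cg w _ e2.
exists (maxn n1 n2) => w' h.
have h1 := H1 w' (cyl_le (leq_maxl _ _) h).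
have h2 := H2 w' (cyl_le (leq_maxr _ _) h).
have := ler_normD (f w' - f w) (g w' - g w).
have -> : f w' - f w + (g w' - g w) = f w' + g w' - (f w + g w) by ring.
lra.
Qed.

Lemma cont_opp f : cont_Omega f -> cont_Omega (fun w => - f w).
Proof.
move=> cf w e e0; have [n Hn] := cf w e e0; exists n => w' h.
by rewrite -opprD normrN; exact: Hn.
Qed.

Lemma cont_sub f g : cont_Omega f -> cont_Omega g -> cont_Omega (fun w => f w - g w).
Proof. by move=> cf cg; apply: cont_add => //; exact: cont_opp. Qed.

Lemma cont_sum (s : seq nat) (F : nat -> Om -> R) : (forall j, cont_Omega (F j)) ->
  cont_Omega (fun w => \sum_(j <- s) F j w).
Proof.
move=> cF; elim: s => [|j s IH].
  by under eq_fun do rewrite big_nil; exact: cont_cst.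
by under eq_fun do rewrite big_cons; exact: cont_add.
Qed.

Lemma cont_ulim g : (forall e : R, 0 < e -> exists h, cont_Omega h /\ forall w, `|h w - g w| < e) ->
  cont_Omega g.
Proof.
move=> H w e e0.
have e3 : 0 < e / 3 by apply: divr_gt0 => //; exact: (ltr0Sn _ 2).
have [h [ch Hh]] := H _ e3.
have [n Hn] := ch w _ e3; exists n => w' hw.
have h1 := Hn _ hw; have h2 := Hh w; have h3 := Hh w'.
have t1 := ler_normD (h w' - h w) (h w - g w).
have t2 := ler_normD (g w' - h w') (h w' - h w + (h w - g w)).
have -> : g w' - g w = g w' - h w' + (h w' - h w + (h w - g w)) by ring.
rewrite distrC in h3. lra.
Qed.

Lemma ccont_comp T1 T2 : ccont T1 -> ccont T2 -> ccont (fun w => T1 (T2 w)).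
Proof.
move=> c1 c2 n; have [m1 H1] := c1 n; have [m2 H2] := c2 m1.
exists m2 => w w' h; exact/H1/H2.
Qed.

Lemma ccont_shiftn i : ccont (shiftn i).
Proof.
move=> n; exists (n + `|i|%N)%N => w w' h k hk; rewrite /shiftn; apply: h; lia.
Qed.

Lemma ccont_Sshift : ccont (@Sshift E a).
Proof. move=> n; exists n.+1 => w w' h k hk; rewrite /Sshift; apply: h; lia. Qed.

Lemma ccont_bc : ccont (@bc E a).
Proof. move=> n; exists n => w w' h k hk; rewrite /bc; case: ifP => // _; exact: h. Qed.

Lemma ccont_upd T b : ccont T -> ccont (fun w => upd (T w) b).
Proof.
move=> cT n; have [m Hm] := cT n; exists m => w w' h k hk; rewrite /upd.
case: ifP => // _; exact: Hm.
Qed.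

Lemma ccont_id : ccont id.
Proof. by move=> n; exists n. Qed.
End Om.
Arguments ccont_Sshift {E a}.
Arguments ccont_bc {E a}.
Arguments ccont_id {E a}.
Arguments ccont_shiftn {E a}.
Arguments cont_cst {R E a}.

Section Meas.
Variables (R : realType) (E : finType) (a : E).
Local Notation Om := (Omega a).
Local Notation B := (BorelOmega a).

Lemma cont_meas (f : Om -> R) : cont_Omega f -> measurable_fun (setT : set B) f.
Proof.
move=> cf; apply: (measurability _ (measurable_realfun.RGenOInfty.measurableE R)).
move=> _ [_ [x ->] <-]; apply: sub_sigma_algebra => w [_ /=].
rewrite in_itv /= andbT => xw.
have [n Hn] := cf w (f w - x) ltac:(by rewrite subr_gt0).
exists n => w' hw; split => //=; rewrite in_itv /= andbT.
have := Hn _ hw; rewrite ltr_norml => /andP[h _]; lra.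
Qed.

Lemma ccont_meas (T : Om -> Om) : ccont T -> measurable_fun (setT : set B) (T : B -> B).
Proof.
move=> cT; apply: (@measurability _ _ B B setT T (@prod_open _ a)) => //.
move=> _ [U oU <-]; apply: sub_sigma_algebra => w [_ /= Uw].
have [n Hn] := oU _ Uw; have [m Hm] := cT n.
exists m => w' hw; split => //; apply: Hn; exact: Hm.
Qed.
End Meas.

Section Integ.
Variables (R : realType) (E : finType) (a : E).
Local Notation Om := (Omega a).
Local Notation B := (BorelOmega a).
Variable tau : probability B R.

Lemma cont_int (f : Om -> R) : cont_Omega f -> tau.-integrable setT (EFin \o f).
Proof.
move=> cf; apply: measurable_bounded_integrable => //.
- apply: (le_lt_trans (probability_le1 tau measurableT)); exact: ltry.
- exact: cont_meas.
- have [K HK] := cont_bounded cf; exists K; split; first exact: num_real.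
  move=> x Kx y _ /=; apply: le_trans (HK y) _; exact: ltW.
Qed.

Definition I (f : Om -> R) : R := fine (\int[tau]_w (f w)%:E)%E.

Lemma IE f : cont_Omega f -> (\int[tau]_w (f w)%:E)%E = (I f)%:E.
Proof. by move=> cf; rewrite /I fineK // integrable_fin_num //; exact: cont_int. Qed.

Lemma I_sub f g : cont_Omega f -> cont_Omega g -> I (fun w => f w - g w) = I f - I g.
Proof.
move=> cf cg; rewrite /I.
under eq_integral do rewrite EFinB.
rewrite integralB_EFin //; try exact: cont_int.
by rewrite !IE.
Qed.

Lemma I_cst (c : R) : I (fun _ => c) = c.
Proof.
rewrite /I; have := integral_cst tau (measurableT : measurable (setT : set B)) c%:E.
rewrite /cst => ->.
by rewrite [X in (_ * X)%E](_ : _ = 1%E) ?mule1 //; exact: probability_setT.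
Qed.

Lemma I_le f g : cont_Omega f -> cont_Omega g -> (forall w, f w <= g w) -> I f <= I g.
Proof.
move=> cf cg h; rewrite -lee_fin -!IE //.
apply: le_integral => //; try exact: cont_int.
by move=> w _ /=; rewrite lee_fin.
Qed.

Lemma I_bound f (e : R) : cont_Omega f -> (forall w, `|f w| <= e) -> `|I f| <= e.
Proof.
move=> cf h; rewrite ler_norml; apply/andP; split.
  rewrite -[X in X <= _](I_cst (- e)); apply: I_le => //; first exact: cont_cst.
  by move=> w; have := h w; rewrite ler_norml => /andP[].
rewrite -[X in _ <= X](I_cst e); apply: I_le => //; first exact: cont_cst.
by move=> w; have := h w; rewrite ler_norml => /andP[].
Qed.

Hypothesis Hinv : forall A : set B, measurable A -> tau (Sshift (a:=a) @^-1` A) = tau A.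

Lemma I_shift f : cont_Omega f -> I (fun w => f (Sshift w)) = I f.
Proof.
move=> cf; rewrite /I; congr fine.
have mS := ccont_meas (@ccont_Sshift E a).
have mf := cont_meas cf.
have mEf := (measurable_realfun.measurable_EFinP _ (f : B -> R)).2 mf.
have intf : tau.-integrable (@Sshift E a @^-1` setT) ((EFin \o (f : B -> R)) \o @Sshift E a).
  exact: (cont_int (cont_comp cf ccont_Sshift)).
have := integral_pushforward mS mEf intf measurableT.
move=> <-. 
apply: eq_measure_integral => A mA _.
by rewrite /pushforward; exact: Hinv.
Qed.
End Integ.

Section Main.
Variables (R : realType) (E : finType) (a : E).
Local Notation Om := (Omega a).
Variable phi : Om -> R.
Hypothesis phi_cont : cont_Omega phi.

Lemma symsum_add x y z n : symsum phi x z n = symsum phi x y n + symsum phi y z n.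
Proof. rewrite /symsum -big_split /=; apply: eq_bigr => j _; ring. Qed.

Lemma symsum_opp x y n : symsum phi x y n = - symsum phi y x n.
Proof. rewrite /symsum -sumrN; apply: eq_bigr => j _; ring. Qed.

Lemma upd_self (x : Om) : upd x (x 0) = x.
Proof. by apply/funext => k; rewrite /upd; case: eqP => // ->. Qed.

Lemma upd_upd (x : Om) b c : upd (upd x b) c = upd x c.
Proof. by apply/funext => k; rewrite /upd; case: (k == 0). Qed.

Lemma shift_upd_bc (w : Om) i :
  shiftn i (upd (bc w) a) = shiftn (i - 1) (bc (Sshift w)).
Proof.
apply/funext => k; rewrite /shiftn /upd /bc /Sshift.
have -> : k + (i - 1) + 1 = k + i by rewrite -addrA subrK.
case: eqP => h1.
  by case: ifP => h3 //; lia.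
case: ifP => h2; case: ifP => h3 //; lia.
Qed.

Lemma cont_symsum n : cont_Omega (fun w : Om => symsum phi (bc w) (upd (bc w) a) n).
Proof.
rewrite /symsum.
apply: (@cont_sum _ _ _ _ (fun j w => phi (shiftn (j%:Z - n%:Z) (bc w)) -
          phi (shiftn (j%:Z - n%:Z) (upd (bc w) a)))) => j.
apply: cont_sub; apply: cont_comp => //.
  exact: ccont_comp (ccont_shiftn _) ccont_bc.
exact: ccont_comp (ccont_shiftn _) (ccont_upd a ccont_bc).
Qed.

Hypothesis phi_ext : extensible phi.

Lemma pg_formula : exists Gp : E -> Om -> R,
  (forall w, phi_gamma phi w = - Gp (bc w 0) (bc w)) /\
  (forall e : R, 0 < e -> exists N, forall n, (N <= n)%N -> forall (x : Om) b,
      `|symsum phi (upd x a) (upd x b) n - Gp b x| < e).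
Proof.
have /choice [G HG] := fun bb : E * E => phi_ext bb.1 bb.2.
exists (fun b => G (a, b)); split.
  move=> w; set x := bc w.
  have rho1 c : rho phi (upd x c) (upd x a) = G (c, a) x.
    apply: limn_eps => e e0; have [N HN] := HG (c, a) e e0.
    by exists N => n Nn; exact: HN.
  have rho2 c : rho phi (upd x c) x = G (c, a) x + G (a, x 0) x.
    apply: limn_eps => e e0.
    have e2 : 0 < e / 2 by apply: divr_gt0 => //; exact: (ltr0Sn _ 1).
    have [N1 HN1] := HG (c, a) _ e2; have [N2 HN2] := HG (a, x 0) _ e2.
    exists (maxn N1 N2) => n Nn.
    rewrite (symsum_add _ (upd x a)).
    have -> : symsum phi (upd x a) x n = symsum phi (upd x a) (upd x (x 0)) n by rewrite upd_self.
    have h1 := HN1 n (leq_trans (leq_maxl _ _) Nn) x.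
    have h2 := HN2 n (leq_trans (leq_maxr _ _) Nn) x.
    have t := ler_normD (symsum phi (upd x c) (upd x a) n - G (c, a) x)
                        (symsum phi (upd x a) (upd x (x 0)) n - G (a, x 0) x).
    have -> : symsum phi (upd x c) (upd x a) n + symsum phi (upd x a) (upd x (x 0)) n -
        (G (c, a) x + G (a, x 0) x) = symsum phi (upd x c) (upd x a) n - G (c, a) x +
        (symsum phi (upd x a) (upd x (x 0)) n - G (a, x 0) x) by ring.
    lra.
  rewrite /phi_gamma /gamma0 -/x.
  have -> : \sum_c expR (rho phi (upd (upd x a) c) (upd x a)) = \sum_c expR (G (c, a) x).
    by apply: eq_bigr => c _; rewrite upd_upd rho1.
  have -> : \sum_c expR (rho phi (upd x c) x) =
      (\sum_c expR (G (c, a) x)) * expR (G (a, x 0) x).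
    by rewrite mulr_suml; apply: eq_bigr => c _; rewrite rho2 expRD.
  set S := \sum_(c : E) expR (G (c, a) x).
  have S0 : 0 < S.
    rewrite /S (bigD1 a) //= ltr_pwDl ?expR_gt0 //.
    by apply: sumr_ge0 => c _; exact: expR_ge0.
  rewrite invfM invrK mulrAC mulVf ?gt_eqF // mul1r -expRN expRK //.
move=> e e0.
have /choice [Nf HNf] : forall b, exists N, forall n, (N <= n)%N -> forall x : Om,
    `|symsum phi (upd x a) (upd x b) n - G (a, b) x| < e.
  by move=> b; exact: (HG (a, b) e e0).
exists (\max_(b : E) Nf b) => n Nn x b; apply: HNf.
apply: leq_trans Nn; exact: (leq_bigmax_cond b).
Qed.
End Main.

Section Final.
Variables (R : realType) (E : finType) (a : E).
Local Notation Om := (Omega a).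
Local Notation B := (BorelOmega a).
Variable phi : Om -> R.
Hypothesis phi_cont : cont_Omega phi.
Hypothesis phi_ext : extensible phi.

Definition F n (w : Om) := symsum phi (bc w) (upd (bc w) a) n.

Lemma F_approx (e : R) : 0 < e -> exists N, forall n, (N <= n)%N ->
  forall w, `|F n w - phi_gamma phi w| < e.
Proof.
move=> e0; have [Gp [HGp HU]] := pg_formula phi_ext.
have [N HN] := HU e e0; exists N => n Nn w.
have h := HN n Nn (bc w) (bc w 0).
rewrite /F HGp.
have -> : symsum phi (bc w) (upd (bc w) a) n =
    - symsum phi (upd (bc w) a) (upd (bc w) (bc w 0)) n by rewrite upd_self symsum_opp.
rewrite -normrN.
have -> : - (- symsum phi (upd (bc w) a) (upd (bc w) (bc w 0)) n - - Gp (bc w 0) (bc w)) =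
  symsum phi (upd (bc w) a) (upd (bc w) (bc w 0)) n - Gp (bc w 0) (bc w) by ring.
exact: h.
Qed.

Lemma cont_pg : cont_Omega (phi_gamma phi).
Proof.
apply: cont_ulim => e e0; have [N HN] := F_approx e0.
exists (F N); split; last exact: HN.
exact: cont_symsum.
Qed.

Definition u (i : int) (w : Om) := phi (shiftn i (bc w)).

Lemma cont_u i : cont_Omega (u i).
Proof. apply: cont_comp => //; exact: ccont_comp (ccont_shiftn _) ccont_bc. Qed.

Definition H n (w : Om) := \sum_(0 <= j < (2 * n).+1) u (j%:Z - n%:Z - 1) w.

Lemma cont_H n : cont_Omega (H n).
Proof. apply: (@cont_sum _ _ _ _ (fun j => u (j%:Z - n%:Z - 1))) => j; exact: cont_u. Qed.

Lemma F_decomp n w : F n w = (u n w - u (- n%:Z - 1) w) - (H n (Sshift w) - H n w).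
Proof.
rewrite /F /symsum.
under eq_bigr do rewrite shift_upd_bc.
pose v j := u (j%:Z - n%:Z - 1) w.
rewrite (eq_bigr (fun j => (v j.+1 - v j) + (u (j%:Z - n%:Z - 1) w - u (j%:Z - n%:Z - 1) (Sshift w)))); last first.
  move=> j _; rewrite /v.
  have -> : (j.+1)%:Z - n%:Z - 1 = j%:Z - n%:Z by lia.
  rewrite /u; ring.
rewrite big_split /= telescope_sumr // /v.
have -> : ((2 * n).+1)%:Z - n%:Z - 1 = n%:Z by lia.
have -> : (0%N)%:Z - n%:Z - 1 = - n%:Z - 1 by lia.
rewrite /H -sumrB; congr (_ + _); rewrite -sumrN; by apply: eq_bigr => i _; rewrite opprB.
Qed.
End Final.

Section Final2.
Variables (R : realType) (E : finType) (a : E).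
Local Notation Om := (Omega a).
Local Notation B := (BorelOmega a).
Variable phi : Om -> R.
Hypothesis phi_cont : cont_Omega phi.
Variable tau : probability B R.
Hypothesis Hinv : forall A : set B, measurable A -> tau (Sshift (a:=a) @^-1` A) = tau A.

Lemma I_shiftn f n : cont_Omega f -> I tau (fun w => f (shiftn n%:Z w)) = I tau f.
Proof.
move=> cf; elim: n => [|n IH].
  by congr (I tau _); apply/funext => w; congr f; apply/funext => k; rewrite /shiftn addr0.
rewrite -IH -[RHS](I_shift Hinv); last by apply: cont_comp => //; exact: ccont_shiftn.
congr (I tau _); apply/funext => w; congr f; apply/funext => k.
rewrite /shiftn /Sshift -addrA; congr w; lia.
Qed.

Lemma I_F n : I tau (F phi n) = I tau (u phi n) - I tau (u phi (- n%:Z - 1)).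
Proof.
have -> : F phi n = fun w => (u phi n w - u phi (- n%:Z - 1) w) -
    (H phi n (Sshift w) - H phi n w) by apply/funext => w; exact: F_decomp.
have cu := cont_u phi_cont; have cH := cont_H phi_cont n.
have cHS : cont_Omega (fun w => H phi n (Sshift w)) by apply: cont_comp => //; exact: ccont_Sshift.
rewrite I_sub //; try exact: cont_sub.
rewrite (I_sub _ cHS cH) (I_shift Hinv cH) subrr subr0; exact: I_sub.
Qed.
End Final2.

Lemma zero_eps (R : realType) (y : R) : (forall e : R, 0 < e -> -(3 * e) <= y <= 3 * e) -> y = 0.
Proof.
move=> h; apply/eqP; apply: contraT => ny.
have [yp|yn] := ltrP 0 y.
  have /andP[_ h2] := h (y / 6) ltac:(apply: divr_gt0 => //).
  lra.
have y0 : y < 0 by rewrite lt_neqAle ny yn.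
have /andP[h1 _] := h (- y / 6) ltac:(apply: divr_gt0 => //; lra).
lra.
Qed.

Unset Implicit Arguments.
Theorem lemma5p1 (R : realType) (E : finType) (a : E)
  (phi : Omega a -> R) (phi_cont : cont_Omega phi) (phi_ext : extensible phi) :
  exists C : R,
    forall tau : probability (BorelOmega a) R,
      (forall A : set (BorelOmega a), measurable A ->
         tau (Sshift (a:=a) @^-1` A) = tau A) ->
      (\int[tau]_w (phi_gamma phi w)%:E = \int[tau]_w (phi w)%:E + C%:E)%E.
Proof.
exists (- phi (fun _ => a)) => tau Hinv.
have cpg := cont_pg phi_cont phi_ext.
rewrite (IE tau cpg) (IE tau phi_cont) -EFinD; congr EFin.
apply/eqP; rewrite -subr_eq0; apply/eqP; apply: zero_eps => e e0.
have [N1 HN1] := F_approx phi_ext e0.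
have [N2 HN2] := phi_cont (fun _ => a) e e0.
have [N3 HN3] := cont_unif phi_cont e0.
set n := maxn N1 (maxn N2 N3).
have n1 : (N1 <= n)%N by rewrite /n; lia.
have n2 : (N2 <= n)%N by rewrite /n; lia.
have n3 : (N3 <= n)%N by rewrite /n; lia.
have b1 : `|I tau (phi_gamma phi) - I tau (F phi n)| <= e.
  rewrite -I_sub //; last exact: cont_symsum.
  apply: I_bound; first by apply: cont_sub => //; exact: cont_symsum.
  by move=> w; rewrite distrC; apply: ltW; exact: HN1.
have b2 : `|I tau (u phi n) - I tau phi| <= e.
  rewrite -(I_shiftn Hinv n phi_cont) -I_sub //; last first.
    by apply: cont_comp => //; exact: ccont_shiftn.
    exact: cont_u.
  apply: I_bound.
    by apply: cont_sub; [exact: cont_u|apply: cont_comp => //; exact: ccont_shiftn].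
  move=> w; apply: ltW; rewrite /u; apply: HN3 => k hk.
  rewrite /shiftn /bc; case: ifP => // h; lia.
have b3 : `|I tau (u phi (- n%:Z - 1)) - phi (fun _ => a)| <= e.
  rewrite -[X in _ - X](I_cst tau (phi (fun _ => a))) -I_sub //; try exact: cont_u; try exact: cont_cst.
  apply: I_bound; first by apply: cont_sub; [exact: cont_u|exact: cont_cst].
  move=> w; apply: ltW; rewrite /u; apply: HN2 => k hk.
  rewrite /shiftn /bc; case: ifP => // h; lia.
rewrite (I_F phi_cont Hinv) in b1.
move: b1 b2 b3; rewrite !ler_norml => /andP[b1 b1'] /andP[b2 b2'] /andP[b3 b3'].
apply/andP; split; lra.
Qed.
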